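(* For every integer $n\geq2$, $\mathcal{M}^{\perp}\cap HC(W_n^{*})=\varnothing$.
   Context: $H^2$ denotes the Hardy space of analytic functions $f(z)=\sum_{j\ge0}\hat f(j)z^j$ on the open unit disk $\mathbb{D}$ with $\sum_{j}|\hat f(j)|^2<\infty$. For $n\in\mathbb{N}$, $W_n$ is the bounded operator on $H^2$ given by $W_nf(z)=(1+z+\cdots+z^{n-1})f(z^n)$, $W_n^{*}$ is its adjoint, and $HC(W_n^{*})$ is the set of vectors with dense orbit under $W_n^{*}$. For each integer $k\geq2$, $h_k(z)=\frac{1}{1-z}\log\left(\frac{1+z+\cdots+z^{k-1}}{k}\right)$ (holomorphic branch of the logarithm on $\mathbb{D}$, real at $z=0$), which lies in $H^2$; $\mathcal{M}=\mathrm{span}\{h_k-h_\ell:k,\ell\geq2\}$ and $\mathcal{M}^\perp$ is its orthogonal complement in $H^2$. *)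

(* Defs.v *)
From Stdlib Require Import Reals.
From Coquelicot Require Import Coquelicot.
Open Scope R_scope.

(* H^2 is identified (isometrically) with l^2(N; C) via Taylor coefficients:
   f(z) = sum_j f_j z^j  <->  the sequence (f_j)_j. *)
Definition seqC := nat -> C.

Definition inH2 (a : seqC) : Prop := ex_series (fun j => (Cmod (a j)) ^ 2).

Definition ip (a b : seqC) : C :=
  (Series (fun j => Re (Cmult (a j) (Cconj (b j)))),
   Series (fun j => Im (Cmult (a j) (Cconj (b j))))).

Definition normsq (a : seqC) : R := Series (fun j => (Cmod (a j)) ^ 2).

(* W_n f(z) = (1 + z + ... + z^(n-1)) f(z^n): the coefficient of z^m is
   \hat f (m div n). *)
Definition Wn (n : nat) (a : seqC) : seqC := fun m => a (Nat.div m n).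

Definition preserves_H2 (S : seqC -> seqC) : Prop :=
  forall a, inH2 a -> inH2 (S a).
Definition is_adjoint_of (T S : seqC -> seqC) : Prop :=
  forall a b, inH2 a -> inH2 b -> ip (S a) b = ip a (T b).

Definition hypercyclic (S : seqC -> seqC) (x : seqC) : Prop :=
  inH2 x /\
  forall y, inH2 y -> forall eps, 0 < eps ->
    exists m : nat, normsq (fun j => Cminus (Nat.iter m S x j) (y j)) < eps.

(* Taylor coefficients of h_k(z) = (1/(1-z)) log((1+z+...+z^(k-1))/k).
   Since (1+...+z^(k-1))/k = (1-z^k)/(k(1-z)), with the principal branch
   (real at 0):  log(...) = -ln k + sum_{m>=1} z^m/m - sum_{m>=1} z^(k m)/m,
   whose m-th coefficient is logcoef k m below; dividing by (1-z) takes
   partial sums. *)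
Definition logcoef (k m : nat) : R :=
  match m with
  | O => - ln (INR k)
  | S _ => / INR m - (if Nat.eqb (Nat.modulo m k) 0 then INR k / INR m else 0)
  end.
Definition hcoef (k j : nat) : R := sum_f_R0 (logcoef k) j.
Definition h (k : nat) : seqC := fun j => RtoC (hcoef k j).

Fixpoint csum (N : nat) (F : nat -> C) : C :=
  match N with
  | O => RtoC 0
  | S N' => Cplus (csum N' F) (F N')
  end.

Definition inM (g : seqC) : Prop :=
  exists (N : nat) (ks ls : nat -> nat) (c : nat -> C),
    (forall i, (i < N)%nat -> (2 <= ks i)%nat /\ (2 <= ls i)%nat) /\
    g = (fun j => csum N (fun i => Cmult (c i) (Cminus (h (ks i) j) (h (ls i) j)))).

Definition inMperp (f : seqC) : Prop :=
  inH2 f /\ forall g, inM g -> ip f g = RtoC 0.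

(* Main.v *)
Require Import Defs.
From Stdlib Require Import Reals Lra Lia FunctionalExtensionality.
From Coquelicot Require Import Coquelicot.
Open Scope R_scope.

Lemma ln_le_sub1 y : 0 < y -> ln y <= y - 1.
Proof.
  intros Hy. destruct (Req_dec (ln y) 0) as [E|E].
  - rewrite E. assert (y = 1). { rewrite <- (exp_ln y Hy), E. apply exp_0. } lra.
  - pose proof (exp_ineq1 _ E). rewrite exp_ln in H by exact Hy. lra.
Qed.

Lemma ln_step_up (m : R) : 1 <= m -> ln (m + 1) - ln m <= / m.
Proof.
  intros Hm. rewrite <- ln_div by lra.
  eapply Rle_trans. apply ln_le_sub1. apply Rdiv_lt_0_compat; lra.
  right. field. lra.
Qed.

Lemma ln_step_down (m : R) : 1 <= m -> / (m + 1) <= ln (m + 1) - ln m.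
Proof.
  intros Hm. assert (ln (m / (m+1)) <= m/(m+1) - 1).
  apply ln_le_sub1. apply Rdiv_lt_0_compat; lra.
  rewrite ln_div in H by lra.
  replace (m / (m+1) - 1) with (- / (m+1)) in H by (field; lra). lra.
Qed.

Lemma ex_series_inv_sq : ex_series (fun j => / (INR j + 1) ^ 2).
Proof.
  apply ex_series_Reals_1.
  apply growing_cv.
  - intros n. change (sum_f_R0 (fun j => / (INR j + 1) ^ 2) (S n)) with (sum_f_R0 (fun j => / (INR j + 1) ^ 2) n + / (INR (S n) + 1) ^ 2). assert (0 <= / (INR (S n) + 1) ^ 2).
    { apply Rlt_le, Rinv_0_lt_compat. apply pow_lt. pose proof (pos_INR (S n)). lra. }
    lra.
  - exists 2. intros x [N ->].
    assert (forall N, sum_f_R0 (fun j => / (INR j + 1) ^ 2) N <= 2 - / (INR N + 1)).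
    { induction N0.
      - simpl sum_f_R0. replace (/ (INR 0 + 1)^2) with 1 by (simpl; field). replace (/ (INR 0 + 1)) with 1 by (simpl; field). lra.
      - change (sum_f_R0 (fun j => / (INR j + 1) ^ 2) (S N0)) with (sum_f_R0 (fun j => / (INR j + 1) ^ 2) N0 + / (INR (S N0) + 1) ^ 2). rewrite S_INR. pose proof (pos_INR N0).
        assert (/ (INR N0 + 1 + 1) ^ 2 <= / (INR N0 + 1) - / (INR N0 + 1 + 1)).
        { replace (/ (INR N0 + 1) - / (INR N0 + 1 + 1)) with (/ ((INR N0 + 1) * (INR N0 + 1 + 1))) by (field; lra).
          apply Rinv_le_contravar. apply Rmult_lt_0_compat; lra. simpl. nra. }
        lra. }
    specialize (H N). assert (0 < / (INR N + 1)). apply Rinv_0_lt_compat. pose proof (pos_INR N). lra. lra.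
Qed.

Lemma Series_nonneg (a : nat -> R) : ex_series a -> (forall n, 0 <= a n) -> 0 <= Series a.
Proof.
  intros Ha Hp.
  assert (Series (fun n => 0 * a n) = 0). { rewrite Series_scal_l. ring. }
  rewrite <- H. apply Series_le; auto. intros n. split. lra. specialize (Hp n). lra.
Qed.

Fixpoint Hn (j : nat) : R := match j with O => 0 | S j' => Hn j' + / INR (S j') end.

Lemma Hn_bounds (q d : nat) : (1 <= q)%nat ->
  ln (INR (q + d) + 1) - ln (INR q + 1) <= Hn (q + d) - Hn q <= ln (INR (q + d)) - ln (INR q).
Proof.
  intros Hq. assert (1 <= INR q) by (apply (le_INR 1); lia).
  induction d.
  - rewrite Nat.add_0_r. lra.
  - replace (q + S d)%nat with (S (q + d)) by lia. change (Hn (S (q+d))) with (Hn (q+d) + / INR (S (q+d))).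
    rewrite S_INR. assert (1 <= INR (q + d)) by (apply (le_INR 1); lia).
    pose proof (ln_step_up (INR (q+d)) H0). pose proof (ln_step_up (INR (q+d) + 1) ltac:(lra)).
    pose proof (ln_step_down (INR (q+d)) H0). lra.
Qed.


Lemma hcoef_closed (k j : nat) : (1 <= k)%nat ->
  hcoef k j = - ln (INR k) + Hn j - Hn (j / k).
Proof.
  intros Hk. induction j.
  - rewrite Nat.div_0_l by lia. simpl. unfold hcoef. simpl. lra.
  - unfold hcoef in *. change (sum_f_R0 (logcoef k) (S j)) with (sum_f_R0 (logcoef k) j + logcoef k (S j)).
    rewrite IHj. change (Hn (S j)) with (Hn j + / INR (S j)).
    unfold logcoef.
    pose proof (Nat.div_mod_eq j k) as Ej. pose proof (Nat.mod_upper_bound j k ltac:(lia)) as Bj.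
    pose proof (Nat.div_mod_eq (S j) k) as Esj. pose proof (Nat.mod_upper_bound (S j) k ltac:(lia)) as Bsj.
    destruct (Nat.eqb_spec (S j mod k) 0) as [E|E].
    + assert (Q : (S j / k = S (j / k))%nat).
      { rewrite E, Nat.add_0_r in Esj. remember (S j / k)%nat as Q.
        destruct Q as [|Q]. lia.
        f_equal. apply (Nat.div_unique _ _ _ (k - 1)). lia.
        rewrite Nat.mul_succ_r in Esj. lia. }
      rewrite Q. change (Hn (S (j / k))) with (Hn (j/k) + / INR (S (j / k))).
      assert (INR (S j) = INR k * INR (S (j / k))).
      { rewrite <- mult_INR. f_equal. rewrite <- Q. lia. }
      rewrite H. assert (0 < INR k) by (apply lt_0_INR; lia).
      assert (0 < INR (S (j/k))) by (apply lt_0_INR; lia).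
      field. lra.
    + assert (Q : (S j / k = j / k)%nat).
      { apply (Nat.div_unique _ _ _ (S j mod k - 1)). lia.
        remember (k * (S j / k))%nat as P. lia. }
      rewrite Q. ring.
Qed.

Lemma hcoef_Wn (k n j : nat) : (1 <= k)%nat -> (1 <= n)%nat ->
  hcoef k (j / n) = hcoef (k * n) j - hcoef n j.
Proof.
  intros Hk Hn'. rewrite !hcoef_closed by nia.
  rewrite Nat.Div0.div_div, mult_INR, ln_mult by (apply lt_0_INR; lia).
  rewrite (Nat.mul_comm n k). ring.
Qed.


Lemma div_diff_nonneg (N D : R) : 0 <= N -> 0 < D -> 0 <= N / D.
Proof. intros. apply Rle_mult_inv_pos; auto. Qed.

Lemma hcoef_bound (k j : nat) : (1 <= k)%nat -> (k <= j)%nat ->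
  (hcoef k j) ^ 2 <= 4 * INR k ^ 2 * / (INR j + 1) ^ 2.
Proof.
  intros Hk Hj.
  rewrite hcoef_closed by lia.
  set (q := (j / k)%nat).
  assert (Hq : (1 <= q)%nat). { unfold q. apply Nat.div_le_lower_bound; lia. }
  pose proof (Nat.div_mod_eq j k) as Ej. pose proof (Nat.mod_upper_bound j k ltac:(lia)) as Bj.
  fold q in Ej.
  assert (HJ1 : (k * q <= j)%nat) by lia.
  assert (HJ2 : (j + 1 <= k * q + k)%nat) by lia.
  apply le_INR in HJ1, HJ2. rewrite mult_INR in HJ1. rewrite !plus_INR, mult_INR in HJ2.
  simpl INR in HJ2 at 2.
  assert (Hb := Hn_bounds q (j - q) Hq). replace (q + (j - q))%nat with j in Hb.
  2:{ assert (q <= j)%nat. { apply le_INR in Hq. simpl in Hq. apply INR_le. nra. } lia. }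
  set (J := INR j) in *. set (Q := INR q) in *. set (K := INR k) in *.
  assert (HQ : 1 <= Q) by (apply (le_INR 1); exact Hq).
  assert (HK : 1 <= K) by (apply (le_INR 1); exact Hk).
  assert (HJ : 0 < J) by nra.
  assert (U : - ln K + Hn j - Hn q <= 2 * K / (J + 1)).
  { assert (- ln K + Hn j - Hn q <= ln (J / (K * Q))).
    { rewrite ln_div, ln_mult by nra. lra. }
    assert (ln (J / (K * Q)) <= J / (K * Q) - 1) by (apply ln_le_sub1; apply Rdiv_lt_0_compat; nra).
    assert (J / (K * Q) - 1 <= 2 * K / (J + 1)).
    { assert (0 <= 2 * K / (J + 1) - (J / (K * Q) - 1)); [|lra].
      replace (2 * K / (J + 1) - (J / (K * Q) - 1)) with
        ((2 * K * K * Q - J * (J + 1) + K * Q * (J + 1)) / ((J + 1) * (K * Q))) by (field; nra).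
      assert (0 <= (J+1)*(K*Q + K - 1 - J)) by (apply Rmult_le_pos; lra).
      assert (0 <= K*K*(Q-1)) by (apply Rmult_le_pos; nra).
      assert (0 <= K*(Q+1)*(K-1)) by (apply Rmult_le_pos; nra).
      apply div_diff_nonneg; nra. }
    lra. }
  assert (L : - (2 * K / (J + 1)) <= - ln K + Hn j - Hn q).
  { assert (ln ((J + 1) / (K * (Q + 1))) <= - ln K + Hn j - Hn q).
    { rewrite ln_div, ln_mult by nra. lra. }
    assert (ln ((K * (Q + 1)) / (J + 1)) <= (K * (Q + 1)) / (J + 1) - 1) by (apply ln_le_sub1; apply Rdiv_lt_0_compat; nra).
    assert (ln ((J + 1) / (K * (Q + 1))) = - ln ((K * (Q + 1)) / (J + 1))).
    { rewrite !ln_div by nra. ring. }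
    assert ((K * (Q + 1)) / (J + 1) - 1 <= 2 * K / (J + 1)).
    { assert (0 <= 2 * K / (J + 1) - ((K * (Q + 1)) / (J + 1) - 1)); [|lra].
      replace (2 * K / (J + 1) - ((K * (Q + 1)) / (J + 1) - 1)) with
        ((2 * K - K * (Q + 1) + (J + 1)) / (J + 1)) by (field; nra).
      apply div_diff_nonneg; nra. }
    lra. }
  replace (4 * K ^ 2 * / (J + 1) ^ 2) with ((2 * K / (J + 1)) ^ 2) by (field; nra).
  nra.
Qed.

Lemma inH2_h (k : nat) : (1 <= k)%nat -> inH2 (h k).
Proof.
  intros Hk. unfold inH2, h.
  apply (proj2 (ex_series_incr_n _ k)).
  apply (@ex_series_le R_AbsRing R_CompleteNormedModule) with (b := fun j => 4 * INR k ^ 2 * / (INR j + 1) ^ 2).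
  - intros j. change (norm ?x) with (Rabs x). rewrite Cmod_R, pow2_abs.
    rewrite Rabs_pos_eq by (apply pow2_ge_0).
    eapply Rle_trans. apply hcoef_bound; lia.
    apply Rmult_le_compat_l. pose proof (pow2_ge_0 (INR k)); lra.
    apply Rinv_le_contravar. apply pow_lt. pose proof (pos_INR j); lra.
    apply pow_incr. pose proof (pos_INR j). rewrite plus_INR. pose proof (pos_INR k). lra.
  - apply (ex_series_ext (fun j => scal (4 * INR k ^ 2) (/ (INR j + 1) ^ 2))).
    intros; reflexivity. apply (@ex_series_scal_l R_AbsRing R_NormedModule (4 * INR k ^ 2) (fun j => / (INR j + 1) ^ 2)). apply ex_series_inv_sq.
Qed.


Lemma Cmod_sq (z : C) : Cmod z ^ 2 = fst z ^ 2 + snd z ^ 2.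
Proof. unfold Cmod. apply pow2_sqrt. pose proof (pow2_ge_0 (fst z)); pose proof (pow2_ge_0 (snd z)); lra. Qed.

Lemma ex_series_lin2 (a b : nat -> R) (c1 c2 : R) :
  ex_series a -> ex_series b -> ex_series (fun n => c1 * a n + c2 * b n).
Proof.
  intros Ha Hb.
  apply (@ex_series_plus R_AbsRing R_NormedModule (fun n => c1 * a n) (fun n => c2 * b n)).
  - apply (@ex_series_scal_l R_AbsRing R_NormedModule c1 a Ha).
  - apply (@ex_series_scal_l R_AbsRing R_NormedModule c2 b Hb).
Qed.

Lemma ex_series_R_le (a b : nat -> R) : (forall n, Rabs (a n) <= b n) -> ex_series b -> ex_series a.
Proof. intros H Hb. apply (@ex_series_le R_AbsRing R_CompleteNormedModule) with (b := b); auto. Qed.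

Lemma inH2_le (b a1 a2 : seqC) (c1 c2 : R) : 0 <= c1 -> 0 <= c2 ->
  (forall j, Cmod (b j) ^ 2 <= c1 * Cmod (a1 j) ^ 2 + c2 * Cmod (a2 j) ^ 2) ->
  inH2 a1 -> inH2 a2 -> inH2 b.
Proof.
  intros H1 H2 H Ha1 Ha2. unfold inH2 in *.
  apply ex_series_R_le with (b := fun n => c1 * Cmod (a1 n) ^ 2 + c2 * Cmod (a2 n) ^ 2).
  - intros n. rewrite Rabs_pos_eq by apply pow2_ge_0. apply H.
  - apply ex_series_lin2; auto.
Qed.

Lemma inH2_add (a b : seqC) : inH2 a -> inH2 b -> inH2 (fun j => Cplus (a j) (b j)).
Proof.
  intros Ha Hb. apply (inH2_le _ a b 2 2); try lra; auto.
  intros j. rewrite !Cmod_sq. destruct (a j) as [x1 x2], (b j) as [y1 y2]. simpl. rewrite !Rmult_1_r. pose proof (pow2_ge_0 (x1 - y1)); pose proof (pow2_ge_0 (x2 - y2)). nra.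
Qed.

Lemma inH2_scal (c : C) (a : seqC) : inH2 a -> inH2 (fun j => Cmult c (a j)).
Proof.
  intros Ha. apply (inH2_le _ a a (Cmod c ^ 2) 0); try lra; auto. apply pow2_ge_0.
  intros j. rewrite Cmod_mult, Rpow_mult_distr. lra.
Qed.

Lemma inH2_opp (a : seqC) : inH2 a -> inH2 (fun j => Copp (a j)).
Proof.
  intros Ha. apply (inH2_le _ a a 1 0); try lra; auto.
  intros j. rewrite Cmod_opp. lra.
Qed.

Lemma inH2_minus (a b : seqC) : inH2 a -> inH2 b -> inH2 (fun j => Cminus (a j) (b j)).
Proof. intros Ha Hb. unfold Cminus. apply inH2_add; auto. apply inH2_opp; auto. Qed.

Lemma inH2_csum (N : nat) (F : nat -> seqC) :
  (forall i, (i < N)%nat -> inH2 (F i)) -> inH2 (fun j => csum N (fun i => F i j)).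
Proof.
  induction N; intros HF.
  - simpl. apply (inH2_le _ (h 2) (h 2) 0 0); try lra.
    intros j. rewrite Cmod_0. simpl. lra. apply inH2_h; lia. apply inH2_h; lia.
  - simpl. apply inH2_add. apply IHN. intros; apply HF; lia. apply HF; lia.
Qed.

Lemma inM_inH2 (g : seqC) : inM g -> inH2 g.
Proof.
  intros [N [ks [ls [c [Hkl ->]]]]].
  apply (inH2_csum N (fun i j => Cmult (c i) (Cminus (h (ks i) j) (h (ls i) j)))).
  intros i Hi. apply inH2_scal. destruct (Hkl i Hi). apply inH2_minus; apply inH2_h; lia.
Qed.

Lemma csum_ext (N : nat) (F G : nat -> C) : (forall i, (i < N)%nat -> F i = G i) -> csum N F = csum N G.
Proof.
  induction N; intros H; simpl; auto. rewrite IHN by (intros; apply H; lia). rewrite H by lia. reflexivity.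
Qed.

Lemma Wn_M (n : nat) (g : seqC) : (1 <= n)%nat -> inM g -> inM (Wn n g).
Proof.
  intros Hn [N [ks [ls [c [Hkl ->]]]]].
  exists N, (fun i => ks i * n)%nat, (fun i => ls i * n)%nat, c. split.
  - intros i Hi. destruct (Hkl i Hi). nia.
  - unfold Wn. apply functional_extensionality. intros m. apply csum_ext. intros i Hi.
    destruct (Hkl i Hi). f_equal. unfold h. rewrite !hcoef_Wn by lia.
    unfold Cminus, Cplus, Copp, RtoC. simpl. f_equal; ring.
Qed.

Lemma normsq_minus (x y : seqC) : inH2 x -> inH2 y ->
  normsq (fun j => Cminus (x j) (y j)) =
  normsq x + normsq y - 2 * Series (fun j => Re (Cmult (x j) (Cconj (y j)))).
Proof.
  intros Hx Hy. unfold normsq, inH2 in *.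
  assert (Hr : ex_series (fun j => Re (Cmult (x j) (Cconj (y j))))).
  { apply ex_series_R_le with (b := fun n => / 2 * Cmod (x n) ^ 2 + / 2 * Cmod (y n) ^ 2).
    - intros n. rewrite !Cmod_sq. destruct (x n) as [x1 x2], (y n) as [y1 y2]. simpl.
      rewrite !Rmult_1_r. pose proof (pow2_ge_0 (x1 - y1)); pose proof (pow2_ge_0 (x2 - y2)); pose proof (pow2_ge_0 (x1 + y1)); pose proof (pow2_ge_0 (x2 + y2)). apply Rabs_le. split; nra.
    - apply ex_series_lin2; auto. }
  rewrite <- Series_scal_l.
  rewrite <- (Series_plus (fun j => Cmod (x j) ^ 2) (fun j => Cmod (y j) ^ 2)) by auto.
  rewrite <- Series_minus.
  - apply Series_ext. intros j. rewrite !Cmod_sq. destruct (x j) as [x1 x2], (y j) as [y1 y2].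
    simpl. ring.
  - pose proof (ex_series_lin2 _ _ 1 1 Hx Hy) as E.
    eapply ex_series_ext; [|exact E]. intros; simpl; ring.
  - pose proof (ex_series_lin2 _ _ 2 0 Hr Hr) as E.
    eapply ex_series_ext; [|exact E]. intros; simpl; ring.
Qed.


Theorem mainTheorem19 :
  forall (n : nat), (2 <= n)%nat ->
  forall (Wstar : seqC -> seqC),
    preserves_H2 Wstar -> is_adjoint_of (Wn n) Wstar ->
  forall f : seqC, inMperp f -> ~ hypercyclic Wstar f.
Proof.
  intros n Hn W Hpres Hadj f Hf [_ Hhc].
  assert (Horb : forall m, inMperp (Nat.iter m W f)).
  { induction m. exact Hf. simpl. destruct IHm as [Hx Hx0]. split.
    - apply Hpres, Hx.
    - intros g Hg. rewrite Hadj; auto. apply Hx0. apply Wn_M; auto; lia. apply inM_inH2; auto. }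
  set (y := fun j => csum 1 (fun i => Cmult (RtoC 1) (Cminus (h 2 j) (h 3 j)))).
  assert (HyM : inM y).
  { exists 1%nat, (fun _ => 2%nat), (fun _ => 3%nat), (fun _ => RtoC 1). split; auto. }
  assert (Hy : inH2 y) by (apply inM_inH2; auto).
  assert (Hy0 : y 0%nat = RtoC (ln 3 - ln 2)).
  { unfold y, h, hcoef. simpl. unfold Cminus, Cplus, Cmult, Copp, RtoC. simpl. f_equal; [replace (1+1+1) with 3 by ring; replace (1+1) with 2 by ring; ring | ring]. }
  assert (Hpos : 0 < normsq y).
  { unfold normsq. rewrite Series_incr_1 by exact Hy. rewrite Hy0, Cmod_R.
    assert (0 < ln 3 - ln 2). { pose proof (ln_increasing 2 3). lra. }
    assert (0 <= Series (fun k => Cmod (y (S k)) ^ 2)).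
    { apply Series_nonneg. apply (proj1 (@ex_series_incr_1 R_AbsRing R_NormedModule (fun k => Cmod (y k) ^ 2))), Hy. intros; apply pow2_ge_0. }
    rewrite Rabs_pos_eq by lra. nra. }
  destruct (Hhc y Hy (normsq y) Hpos) as [m Hm].
  destruct (Horb m) as [Hx Hx0].
  rewrite normsq_minus in Hm by auto.
  specialize (Hx0 y HyM). assert (E := f_equal fst Hx0).
  change (Series (fun j => Re (Cmult (Nat.iter m W f j) (Cconj (y j)))) = 0) in E.
  rewrite E in Hm.
  assert (0 <= normsq (Nat.iter m W f)).
  { apply Series_nonneg. exact Hx. intros; apply pow2_ge_0. }
  lra.
Qed.
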